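(* Let $G$ be a graph, $(\Gamma,\chi)$ a geometric $\ell$-layer drawing of $G$ in general position, $S$ a vertex cover of $G$, and $v\in V(G)\setminus S$. Then there exists a point $p\in C_{\Gamma,S}(v)$ such that cloning $v$ into a new vertex $w$ placed at $p$ yields a geometric $\ell$-layer drawing (in general position) of the resulting graph if and only if $A_{\Gamma,\chi}(v)\neq\emptyset$.
   Context: A straight-line drawing maps vertices to distinct points of $\mathbb{R}^2$, edges being straight segments; a geometric $\ell$-layer drawing $(\Gamma,\chi)$ of $G$ is a straight-line drawing $\Gamma$ with an edge coloring $\chi:E(G)\to[\ell]$ such that no two same-colored edges cross. General position: no three vertices collinear and no three edges crossing at a common point. Cloning $v$ into $w$ placed at $p$ means: add a new vertex $w$ with $N(w)=N_G(v)$, set $\Gamma(w)=p$, and color each edge $wu$ ($u\in N_G(v)$) with $\chi(vu)$. For distinct vertices $v,a,b$: $H_\Gamma(v,a,b)$ is the open half-plane bounded by the line through $\Gamma(a),\Gamma(b)$ not containing $\Gamma(v)$; $T_\Gamma(v,a,b)$ is the interior of the ''tie'' (double wedge) with center $\Gamma(v)$ and directions $\Gamma(a)-\Gamma(v)$ and $\Gamma(b)-\Gamma(v)$, i.e. the set $\{\Gamma(v)+\lambda(\alpha(\Gamma(a)-\Gamma(v))+\beta(\Gamma(b)-\Gamma(v))): \alpha,\beta>0,\lambda\neq 0\}$. The cell of $v$ is $C_{\Gamma,S}(v)=\mathbb{R}^2\setminus\bigcup_{a,b\in S,a\neq b}H_\Gamma(v,a,b)$. The admissible region is $A_{\Gamma,\chi}(v)=\bigcap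 T_\Gamma(v,a,b)$, the intersection over all distinct $a,b\in N_G(v)$ with $\chi(va)=\chi(vb)$ (the empty intersection being $\mathbb{R}^2$). *)

(* Defs.v *)
From mathcomp Require Import all_boot all_order all_algebra.
From mathcomp Require Import reals.
Set Implicit Arguments. Unset Strict Implicit. Unset Printing Implicit Defensive.
Import Order.TTheory GRing.Theory Num.Theory.
Local Open Scope ring_scope.

Section Geometry.
Variable R : realType.
Notation pt := (R * R)%type.

Definition orient (p q r : pt) : R :=
  (q.1 - p.1) * (r.2 - p.2) - (q.2 - p.2) * (r.1 - p.1).

Definition on_open_seg (x p q : pt) : Prop :=
  exists t : R, 0 < t < 1 /\ x = (p.1 + t * (q.1 - p.1), p.2 + t * (q.2 - p.2)).

Variable V : finType.

Definition same_edge (a b c d : V) : Prop :=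
  (a = c /\ b = d) \/ (a = d /\ b = c).

Definition edges_cross (G : V -> pt) (a b c d : V) : Prop :=
  ~ same_edge a b c d /\
  exists x, on_open_seg x (G a) (G b) /\ on_open_seg x (G c) (G d).

(* geometric l-layer drawing: straight-line drawing (distinct points),
   chi an edge colouring E(G) -> [l] (given as a symmetric function on
   adjacent pairs, values in {0,...,l-1}), no two same-coloured edges cross *)
Definition layer_drawing (e : rel V) (l : nat) (G : V -> pt)
    (chi : V -> V -> nat) : Prop :=
  injective G /\
  (forall a b, e a b -> (chi a b < l)%N) /\
  (forall a b, e a b -> chi a b = chi b a) /\
  (forall a b c d, e a b -> e c d -> chi a b = chi c d ->
     ~ edges_cross G a b c d).

Definition general_position (e : rel V) (G : V -> pt) : Prop :=
  (forall a b c : V, a <> b -> b <> c -> a <> c -> orient (G a) (G b) (G c) != 0) /\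
  (forall a1 b1 a2 b2 a3 b3 (x : pt), e a1 b1 -> e a2 b2 -> e a3 b3 ->
     ~ same_edge a1 b1 a2 b2 -> ~ same_edge a1 b1 a3 b3 -> ~ same_edge a2 b2 a3 b3 ->
     on_open_seg x (G a1) (G b1) -> on_open_seg x (G a2) (G b2) ->
     on_open_seg x (G a3) (G b3) -> False).

Definition vertex_cover (e : rel V) (S : {set V}) : Prop :=
  forall a b, e a b -> a \in S \/ b \in S.

(* cloning v into a new vertex w = None *)
Definition clone_rel (e : rel V) (v : V) : rel (option V) :=
  fun x y => match x, y with
             | Some a, Some b => e a b
             | None, Some b => e v b
             | Some a, None => e v a
             | None, None => false
             end.

Definition clone_draw (G : V -> pt) (p : pt) : option V -> pt :=
  fun x => match x with Some a => G a | None => p end.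

Definition clone_col (chi : V -> V -> nat) (v : V) : option V -> option V -> nat :=
  fun x y => match x, y with
             | Some a, Some b => chi a b
             | None, Some b => chi v b
             | Some a, None => chi v a
             | None, None => 0%N
             end.

Definition halfplane (G : V -> pt) (v a b : V) (q : pt) : Prop :=
  orient (G a) (G b) q * orient (G a) (G b) (G v) < 0.

Definition tie (G : V -> pt) (v a b : V) (q : pt) : Prop :=
  exists lam al be : R, lam != 0 /\ 0 < al /\ 0 < be /\
    q = ((G v).1 + lam * (al * ((G a).1 - (G v).1) + be * ((G b).1 - (G v).1)),
         (G v).2 + lam * (al * ((G a).2 - (G v).2) + be * ((G b).2 - (G v).2))).

Definition cell (G : V -> pt) (S : {set V}) (v : V) (q : pt) : Prop :=
  forall a b, a \in S -> b \in S -> a <> b -> ~ halfplane G v a b q.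

Definition admissible (e : rel V) (G : V -> pt) (chi : V -> V -> nat) (v : V)
    (q : pt) : Prop :=
  forall a b, a <> b -> e v a -> e v b -> chi v a = chi v b -> tie G v a b q.

End Geometry.

(* Main.v *)
Require Import Defs.
From mathcomp Require Import all_boot all_order all_algebra.
From mathcomp Require Import reals.
From mathcomp Require Import all_classical topology.
From mathcomp Require Import ring lra.
Import Order.TTheory GRing.Theory Num.Theory.
Import numFieldTopology.Exports.
Local Open Scope classical_set_scope.
Local Open Scope ring_scope.


Lemma ratio01 (R : realType) (a b : R) : a * b < 0 -> 0 < a / (a - b) < 1.
Proof.
move=> h.
have d : a - b != 0 by apply/eqP => E; nra.
have E : a / (a - b) * (a - b) = a by rewrite mulfVK.
set c := a / (a - b) in E *.
apply/andP; split; nra.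
Qed.

Section Geo.
Context {R : realType}.
Local Notation pt := (R * R)%type.

Lemma orient_cyc (a b c : pt) : orient a b c = orient b c a.
Proof. rewrite /orient; ring. Qed.
Lemma orient_swap (a b c : pt) : orient a b c = - orient b a c.
Proof. rewrite /orient; ring. Qed.

Lemma seg_sym {z p q : pt} : on_open_seg z p q -> on_open_seg z q p.
Proof.
case=> t [/andP[t0 t1] ->]; exists (1 - t); split; first (apply/andP; split; lra).
rewrite /=; f_equal; ring.
Qed.

Lemma seg_aff (a b z p q : pt) : on_open_seg z p q ->
  exists t, 0 < t < 1 /\ orient a b z = (1 - t) * orient a b p + t * orient a b q.
Proof.
case=> t [ht ->]; exists t; split => //; rewrite /orient /=; ring.
Qed.

Lemma seg_orient0 {z p q : pt} : on_open_seg z p q -> orient p q z = 0.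
Proof. case=> t [ht ->]; rewrite /orient /=; ring. Qed.

Lemma cross_nonpos {a b p q z : pt} :
  on_open_seg z p q -> on_open_seg z a b -> orient a b p * orient a b q <= 0.
Proof.
move=> /(seg_aff a b) [t [/andP[t0 t1] E]] /seg_orient0 E0.
rewrite E0 in E.
have h : (1 - t) * (orient a b p * orient a b q) = - t * (orient a b q)^+2.
  have -> : - t * (orient a b q)^+2 = (- t * orient a b q) * orient a b q by ring.
  have -> : - t * orient a b q = (1 - t) * orient a b p by lra.
  ring.
have : - t * (orient a b q)^+2 <= 0.
  by rewrite mulNr oppr_le0; apply: mulr_ge0; [lra| apply: sqr_ge0].
rewrite -h => H.
have t1' : 0 < 1 - t by lra.
by rewrite -(pmulr_rle0 _ t1').
Qed.

Lemma shared_end {z a b c : pt} :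
  on_open_seg z a b -> on_open_seg z c b -> orient a b c = 0.
Proof.
case=> t [/andP[t0 t1] E1] [r [_ E2]].
have h1 : orient z b c = (1 - t) * orient a b c by rewrite E1 /orient /=; ring.
have h2 : orient z b c = 0 by rewrite E2 /orient /=; ring.
rewrite h2 in h1.
have : (1 - t) != 0 by rewrite subr_eq0; apply/eqP => h; lra.
by move/eqP=> ne; apply/eqP; move: h1 => /esym/eqP; rewrite mulf_eq0 (negbTE (introN eqP ne)) /=.
Qed.

Lemma pair_eq (a b : pt) : a.1 = b.1 -> a.2 = b.2 -> a = b.
Proof. by case: a; case: b => /= ? ? ? ? -> ->. Qed.

Lemma seg_not_end {z a b : pt} : on_open_seg z a b -> a <> b -> z <> a /\ z <> b.
Proof.
case=> t [/andP[t0 t1] ->] ab; split => E; apply: ab; apply: pair_eq;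
  have h1 := congr1 fst E; have h2 := congr1 snd E; simpl in h1, h2; nra.
Qed.

Lemma both_neg_cross (v u x y : pt) :
  orient x y v * orient x y u < 0 -> orient v u x * orient v u y < 0 ->
  exists z, on_open_seg z v u /\ on_open_seg z x y.
Proof.
move=> h1 h2.
have d1 : orient x y v - orient x y u != 0 by apply/eqP => h; nra.
have d2 : orient v u x - orient v u y != 0 by apply/eqP => h; nra.
set o1 := orient x y v in h1 d1 *; set o2 := orient x y u in h1 d1 *.
set o3 := orient v u x in h2 d2 *; set o4 := orient v u y in h2 d2 *.
exists (v.1 + o1 / (o1 - o2) * (u.1 - v.1), v.2 + o1 / (o1 - o2) * (u.2 - v.2)).
split.
  by exists (o1 / (o1 - o2)); split => //; apply: ratio01.
exists (o3 / (o3 - o4)); split; first exact: ratio01.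
rewrite /o1 /o2 /o3 /o4 in d1 d2 *; rewrite /orient in d1 d2 *.
f_equal; field; rewrite ?d1 ?d2 //.
Qed.

Lemma sq_pos (x : R) : x != 0 -> 0 < x ^+ 2.
Proof. by move=> hx; rewrite exprn_even_gt0 // hx orbT. Qed.

Lemma tie_pos (V : finType) (G : V -> pt) v a b q :
  orient (G v) (G a) (G b) != 0 -> tie G v a b q ->
  0 < orient (G v) q (G b) * orient (G v) (G a) q.
Proof.
move=> k0 [lam [al [be [l0 [a0 [b0 ->]]]]]].
set k := orient (G v) (G a) (G b) in k0 *.
have -> : orient (G v) ((G v).1 + lam * (al * ((G a).1 - (G v).1) + be * ((G b).1 - (G v).1)),
       (G v).2 + lam * (al * ((G a).2 - (G v).2) + be * ((G b).2 - (G v).2))) (G b)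
   = lam * al * k by rewrite /k /orient /=; ring.
have -> : orient (G v) (G a) ((G v).1 + lam * (al * ((G a).1 - (G v).1) + be * ((G b).1 - (G v).1)),
       (G v).2 + lam * (al * ((G a).2 - (G v).2) + be * ((G b).2 - (G v).2)))
   = lam * be * k by rewrite /k /orient /=; ring.
have -> : lam * al * k * (lam * be * k) = (lam * k) ^+ 2 * (al * be) by ring.
by apply: mulr_gt0; [apply: sq_pos; rewrite mulf_neq0 | apply: mulr_gt0].
Qed.

Lemma pos_tie (V : finType) (G : V -> pt) v a b q :
  orient (G v) (G a) (G b) != 0 ->
  0 < orient (G v) q (G b) * orient (G v) (G a) q -> tie G v a b q.
Proof.
move=> k0 hp.
set k := orient (G v) (G a) (G b) in k0 *.
set X := orient (G v) q (G b) in hp *.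
set Y := orient (G v) (G a) q in hp *.
have hk2 := @sq_pos k k0.
have hxy : 0 < (X / k) * (Y / k).
  have -> : X / k * (Y / k) = (X * Y) / k ^+ 2 by rewrite expr2 invfM; ring.
  by apply: divr_gt0.
have E : q = ((G v).1 + (X / k * ((G a).1 - (G v).1) + Y / k * ((G b).1 - (G v).1)),
              (G v).2 + (X / k * ((G a).2 - (G v).2) + Y / k * ((G b).2 - (G v).2))).
  rewrite /X /Y; move: k0; rewrite /k /orient => k0.
  case: q {X Y hp hxy} => q1 q2 /=; f_equal; field => //.
have [xp|xn] := ltrP 0 (X / k).
  exists 1, (X / k), (Y / k); split; first exact: oner_neq0.
  split => //; split; first nra.
  by rewrite E !mul1r.
exists (-1), (- (X / k)), (- (Y / k)); split; first by rewrite oppr_eq0 oner_neq0.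
have xn' : X / k < 0.
  rewrite lt_neqAle xn andbT; apply/eqP => h; rewrite h mul0r in hxy.
  by rewrite ltxx in hxy.
split; first by rewrite oppr_gt0.
split; first by rewrite oppr_gt0; nra.
by rewrite E; f_equal; ring.
Qed.

Lemma tie_nocross {v a b p z : pt} : orient v a b != 0 ->
  0 < orient v p b * orient v a p ->
  on_open_seg z p a -> on_open_seg z v b -> False.
Proof.
move=> k0 hp [t [/andP[t0 t1] Ez]] [r [/andP[r0 r1] Ez']].
set k := orient v a b in k0 *.
set X := orient v p b in hp *.
set Y := orient v a p in hp *.
have e1 : (1 - t) * X + t * k = 0.
  have h1 : (z.1 - v.1) * (b.2 - v.2) - (z.2 - v.2) * (b.1 - v.1) = (1 - t) * X + t * k.
    by rewrite Ez /X /k /orient /=; ring.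
  have h2 : (z.1 - v.1) * (b.2 - v.2) - (z.2 - v.2) * (b.1 - v.1) = 0.
    by rewrite Ez' /=; ring.
  by rewrite -h1 h2.
have e2 : (1 - t) * Y = r * k.
  have h1 : (a.1 - v.1) * (z.2 - v.2) - (a.2 - v.2) * (z.1 - v.1) = (1 - t) * Y.
    by rewrite Ez /Y /orient /=; ring.
  have h2 : (a.1 - v.1) * (z.2 - v.2) - (a.2 - v.2) * (z.1 - v.1) = r * k.
    by rewrite Ez' /k /orient /=; ring.
  by rewrite -h1 h2.
have hk2 := @sq_pos k k0.
have E : (1 - t) ^+ 2 * (X * Y) = - (t * r * k ^+ 2).
  have -> : (1 - t) ^+ 2 * (X * Y) = ((1 - t) * X) * ((1 - t) * Y) by ring.
  have -> : (1 - t) * X = - (t * k) by lra.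
  by rewrite e2; ring.
have h1 : 0 < (1 - t) ^+ 2 * (X * Y) by apply: mulr_gt0 => //; apply: sq_pos; apply/eqP => h; lra.
have h2 : 0 < t * r * k ^+ 2 by apply: mulr_gt0 => //; apply: mulr_gt0.
lra.
Qed.

Lemma cross_construct (v p a b : pt) (x y : R) :
  p.1 = v.1 + x * (a.1 - v.1) + y * (b.1 - v.1) ->
  p.2 = v.2 + x * (a.2 - v.2) + y * (b.2 - v.2) ->
  x < 0 -> 0 < y -> x + y < 1 ->
  exists z, on_open_seg z p a /\ on_open_seg z v b.
Proof.
case: p => p1 p2 /= -> -> x0 y0 xy1.
have d : 1 - x != 0 by apply/eqP => h; lra.
have E1 : y / (1 - x) * (1 - x) = y by rewrite mulfVK.
have E2 : (- x) / (1 - x) * (1 - x) = - x by rewrite mulfVK.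
exists (v.1 + y / (1 - x) * (b.1 - v.1), v.2 + y / (1 - x) * (b.2 - v.2)); split.
  exists ((- x) / (1 - x)); split.
    set c := (- x) / (1 - x) in E2 *; apply/andP; split; nra.
  rewrite /=; f_equal; field => //.
exists (y / (1 - x)); split => //.
set c := y / (1 - x) in E1 *; apply/andP; split; nra.
Qed.

Lemma cross_unique {x2 y2 x3 y3 z z' : pt} :
  orient x3 y3 x2 != 0 \/ orient x3 y3 y2 != 0 ->
  on_open_seg z x2 y2 -> on_open_seg z x3 y3 ->
  on_open_seg z' x2 y2 -> on_open_seg z' x3 y3 -> z = z'.
Proof.
move=> hne [r [_ Ez]] /seg_orient0 h0 [r' [_ Ez']] /seg_orient0 h0'.
set o := orient x3 y3 x2 in hne *; set o' := orient x3 y3 y2 in hne *.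
have e : (1 - r) * o + r * o' = 0 by rewrite -h0 Ez /o /o' /orient /=; ring.
have e' : (1 - r') * o + r' * o' = 0 by rewrite -h0' Ez' /o /o' /orient /=; ring.
have ne : o' - o != 0.
  apply/eqP => h; have oo : o' = o by lra.
  rewrite oo in e hne; have o0 : o = 0 by lra.
  by rewrite o0 eqxx in hne; case: hne.
have rr : r = r'.
  have : (r - r') * (o' - o) = 0 by lra.
  move/eqP; rewrite mulf_eq0 (negbTE ne) orbF subr_eq0 => /eqP //.
by rewrite Ez Ez' rr.
Qed.

Lemma ev_pos (c0 c1 c2 : R) : 0 < c0 ->
  \forall s \near (0:R)^'+, 0 < c0 + s * c1 + s ^+ 2 * c2.
Proof.
move=> c0p.
have Mp : 0 < c0 / (`|c1| + `|c2| + 1).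
  by apply: divr_gt0 => //; rewrite -addrA ltr_pwDr // ltr_pwDr ?normr_ge0.
near=> s.
have s0 : 0 < s by near: s; exact: nbhs_right_gt.
have s1 : s < 1 by near: s; exact: nbhs_right_lt.
have sM : s < c0 / (`|c1| + `|c2| + 1) by near: s; exact: nbhs_right_lt.
have hd : 0 < `|c1| + `|c2| + 1 by rewrite -addrA ltr_pwDr // ltr_pwDr ?normr_ge0.
have sM' : s * (`|c1| + `|c2| + 1) < c0 by rewrite -ltr_pdivlMr.
have h1 : - c1 <= `|c1| by rewrite -normrN ler_norm.
have h2 : - c2 <= `|c2| by rewrite -normrN ler_norm.
have n1 := normr_ge0 c1. have n2 := normr_ge0 c2.
rewrite expr2 -mulrA.
have k1 : 0 <= s * (c1 + `|c1|) by apply: mulr_ge0; lra.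
have k2 : - `|c2| <= s * c2.
  have : 0 <= (1 - s) * `|c2| by apply: mulr_ge0; lra.
  have : 0 <= s * (c2 + `|c2|) by apply: mulr_ge0; lra.
  lra.
have k3 : 0 <= s * (s * c2 + `|c2|) by apply: mulr_ge0; lra.
nra.
Unshelve. all: by end_near.
Qed.

Lemma ev_sign (c0 c1 c2 : R) : c0 != 0 ->
  \forall s \near (0:R)^'+, 0 < (c0 + s * c1 + s ^+ 2 * c2) * c0.
Proof.
move=> c0n; have [cp|cn] := ltrP 0 c0.
  by near=> s; apply: mulr_gt0 => //; near: s; apply: ev_pos.
have cn' : c0 < 0 by rewrite lt_neqAle c0n.
have : \forall s \near (0:R)^'+, 0 < - c0 + s * (- c1) + s ^+ 2 * (- c2).
  by apply: ev_pos; rewrite oppr_gt0.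
apply: filterS => s h.
have -> : (c0 + s * c1 + s ^+ 2 * c2) * c0 = (- c0 + s * (- c1) + s ^+ 2 * (- c2)) * (- c0) by ring.
by apply: mulr_gt0 => //; rewrite oppr_gt0.
Unshelve. all: by end_near.
Qed.

Lemma ev_nz (c0 c1 c2 : R) : c0 != 0 \/ c1 != 0 \/ c2 != 0 ->
  \forall s \near (0:R)^'+, c0 + s * c1 + s ^+ 2 * c2 != 0.
Proof.
case: (eqVneq c0 0) => [->|c0n] H; last first.
  near=> s.
  have h : 0 < (c0 + s * c1 + s ^+ 2 * c2) * c0 by near: s; apply: ev_sign.
  apply/eqP => E; rewrite E mul0r in h.
  by rewrite ltxx in h.
case: (eqVneq c1 0) H => [->|c1n] H.
  have c2n : c2 != 0 by case: H => // [[]].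
  near=> s.
  have s0 : 0 < s by near: s; exact: nbhs_right_gt.
  by rewrite mulr0 !add0r mulf_neq0 // expf_neq0 // lt0r_neq0.
near=> s.
have s0 : 0 < s by near: s; exact: nbhs_right_gt.
have h : 0 < (c1 + s * c2 + s ^+ 2 * 0) * c1 by near: s; exact: (@ev_sign c1 c2 0 c1n).
have -> : 0 + s * c1 + s ^+ 2 * c2 = s * (c1 + s * c2 + s ^+ 2 * 0) by ring.
have hn : c1 + s * c2 + s ^+ 2 * 0 != 0.
  by apply/eqP => E; rewrite E mul0r ltxx in h.
by rewrite mulf_neq0 // lt0r_neq0.
Unshelve. all: by end_near.
Qed.

End Geo.

Section Main.
Variables (R : realType) (V : finType) (e : rel V) (l : nat) (G : V -> (R * R)%type)
  (chi : V -> V -> nat) (S : {set V}) (v : V).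
Hypotheses (esym : symmetric e) (eirr : irreflexive e)
  (LD : layer_drawing e l G chi) (GP : general_position e G)
  (VC : vertex_cover e S) (vS : v \notin S).

Lemma edge_neq {a b} : e a b -> a <> b.
Proof. by move=> h E; rewrite E eirr in h. Qed.

Lemma gp1 {a b c} : a <> b -> b <> c -> a <> c -> orient (G a) (G b) (G c) != 0.
Proof. by case: GP => H _; apply: H. Qed.

Lemma Some_neq {a b : V} : a <> b -> Some a <> Some b.
Proof. by move=> h [/h]. Qed.

Lemma SN (x : V) : Some x <> None. Proof. by []. Qed.
Lemma NS (x : V) : None <> Some x. Proof. by []. Qed.

Lemma forward p : cell G S v p ->
  layer_drawing (clone_rel e v) l (clone_draw G p) (clone_col chi v) ->
  general_position (clone_rel e v) (clone_draw G p) ->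
  admissible e G chi v p.
Proof.
move=> hc [_ [_ [_ NC]]] [GP1 _] a b ab eva evb chab.
have va := edge_neq eva; have vb := edge_neq evb.
have k0 := gp1 va ab vb.
apply: pos_tie => //.
have X0 : orient (G v) p (G b) != 0.
  by have := GP1 (Some v) None (Some b) (SN v) (NS b) (Some_neq vb).
have Y0 : orient (G v) (G a) p != 0.
  by have := GP1 (Some v) (Some a) None (Some_neq va) (SN a) (SN v).
have O0 : orient (G a) (G b) p != 0.
  by have := GP1 (Some a) (Some b) None (Some_neq ab) (SN b) (SN a).
have aS : a \in S by case: (VC v a eva) => //; rewrite (negbTE vS).
have bS : b \in S by case: (VC v b evb) => //; rewrite (negbTE vS).
have Hc := hc a b aS bS ab; rewrite /halfplane in Hc.
set k := orient (G v) (G a) (G b) in k0 *.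
set X := orient (G v) p (G b) in X0 *.
set Y := orient (G v) (G a) p in Y0 *.
have id1 : orient (G a) (G b) p = k - X - Y by rewrite /k /X /Y /orient; ring.
have id2 : orient (G a) (G b) (G v) = k by rewrite /k /orient; ring.
rewrite id1 id2 in Hc O0.
have Hc' : 0 < (k - X - Y) * k.
  rewrite lt0r mulf_neq0 //= leNgt; exact/negP.
have [//|hxy] := ltrP 0 (X * Y).
have hxy' : X * Y < 0 by rewrite lt_neqAle hxy mulf_neq0.
have hk2 := @sq_pos _ k k0.
have ex : p.1 = (G v).1 + X / k * ((G a).1 - (G v).1) + Y / k * ((G b).1 - (G v).1).
  move: k0; rewrite /X /Y /k /orient => k0; field => //.
have ey : p.2 = (G v).2 + X / k * ((G a).2 - (G v).2) + Y / k * ((G b).2 - (G v).2).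
  move: k0; rewrite /X /Y /k /orient => k0; field => //.
have E1 : X / k * k = X by rewrite mulfVK.
have E2 : Y / k * k = Y by rewrite mulfVK.
set x := X / k in ex ey E1; set y := Y / k in ex ey E2.
have xy1 : x + y < 1.
  have : 0 < (1 - x - y) * k ^+ 2.
    by have -> : (1 - x - y) * k ^+ 2 = (k - X - Y) * k by rewrite -E1 -E2; ring.
  by rewrite pmulr_lgt0 // => h; lra.
have xy0 : x * y < 0.
  have : x * y * k ^+ 2 < 0 by have -> : x * y * k ^+ 2 = X * Y by rewrite -E1 -E2; ring.
  by rewrite pmulr_llt0.
have [x0|x0] := ltrP x 0.
  have y0 : 0 < y by nra.
  have [z [z1 z2]] := cross_construct _ _ _ _ _ _ ex ey x0 y0 xy1.
  exfalso; apply: (NC None (Some a) (Some v) (Some b) eva evb chab).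
  split; first by case=> [[]|[]].
  by exists z.
have y0 : y < 0 by nra.
have x0' : 0 < x by rewrite lt_neqAle x0 andbT; apply/eqP => h; rewrite -h mul0r ltxx in xy0.
have ex' : p.1 = (G v).1 + y * ((G b).1 - (G v).1) + x * ((G a).1 - (G v).1) by rewrite ex; ring.
have ey' : p.2 = (G v).2 + y * ((G b).2 - (G v).2) + x * ((G a).2 - (G v).2) by rewrite ey; ring.
have xy1' : y + x < 1 by lra.
have [z [z1 z2]] := cross_construct _ _ _ _ _ _ ex' ey' y0 x0' xy1'.
exfalso; apply: (NC None (Some b) (Some v) (Some a) evb eva (Logic.eq_sym chab)).
split; first by case=> [[]|[]].
by exists z.
Qed.

Section Fixed.
Variable p : (R * R)%type.
Definition C1 := forall a, p <> G a.
Definition C2 := forall a b, a <> b -> orient p (G a) (G b) != 0.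
Definition C4 := forall a b, a <> b -> e v a -> e v b -> chi v a = chi v b ->
  0 < orient (G v) p (G b) * orient (G v) (G a) p.
Definition C5 := forall u x y, e v u -> e x y -> chi v u = chi x y ->
  x <> u -> y <> u -> x <> v -> y <> v ->
  forall z, on_open_seg z p (G u) -> on_open_seg z (G x) (G y) -> False.
Definition C6 := forall u x2 y2 x3 y3 z, e x2 y2 -> e x3 y3 -> ~ same_edge x2 y2 x3 y3 ->
  on_open_seg z (G x2) (G y2) -> on_open_seg z (G x3) (G y3) ->
  on_open_seg z p (G u) -> False.

Lemma NN (c2 : C2) {u u' z} : u <> u' -> on_open_seg z p (G u) -> on_open_seg z p (G u') -> False.
Proof.
move=> uu /seg_sym s1 /seg_sym s2.
have := shared_end s1 s2; rewrite orient_cyc.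
by move/eqP; apply/negP; apply: c2 => h; apply: uu.
Qed.

Lemma NO (c2 : C2) (c4 : C4) (c5 : C5) {u x y z} : e v u -> e x y -> chi v u = chi x y ->
  on_open_seg z p (G u) -> on_open_seg z (G x) (G y) -> False.
Proof.
move=> evu exy ch s1 s2.
have xy := edge_neq exy.
have vu := edge_neq evu.
case: (eqVneq x u) => [xu|xu].
  subst x.
  have := shared_end s1 (seg_sym s2).
  by move/eqP; apply/negP; apply: c2.
case: (eqVneq y u) => [yu|yu].
  subst y.
  have := shared_end s1 s2.
  by move/eqP; apply/negP; apply: c2 => h; apply: xy.
case: (eqVneq x v) => [xv|xv].
  subst x.
  have uy : u <> y by move=> h; rewrite h eqxx in yu.
  have k0 : orient (G v) (G u) (G y) != 0 by apply: gp1.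
  exact: (tie_nocross k0 (c4 _ _ uy evu exy ch) s1 s2).
case: (eqVneq y v) => [yv|yv].
  subst y.
  have ux : u <> x by move=> h; rewrite h eqxx in xu.
  have evx : e v x by rewrite esym.
  have ch' : chi v u = chi v x by rewrite ch; case: LD => _ [_ [Hs _]]; apply: Hs.
  have k0 : orient (G v) (G u) (G x) != 0 by apply: gp1 => // h; apply: xy; rewrite h.
  exact: (tie_nocross k0 (c4 _ _ ux evu evx ch') s1 (seg_sym s2)).
move/eqP: xu => xu; move/eqP: yu => yu; move/eqP: xv => xv; move/eqP: yv => yv.
exact: (c5 _ _ _ evu exy ch xu yu xv yv _ s1 s2).
Qed.
Definition isnew (a b : option V) u := (a = None /\ b = Some u) \/ (a = Some u /\ b = None).

Lemma cls {a b} : clone_rel e v a b ->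
  (exists x y, [/\ a = Some x, b = Some y & e x y]) \/ (exists u, e v u /\ isnew a b u).
Proof.
case: a b => [x|] [y|] //= h; first by left; exists x, y.
- by right; exists x; split => //; right.
- by right; exists y; split => //; left.
Qed.

Lemma new_seg {a b u z} : isnew a b u ->
  on_open_seg z (clone_draw G p a) (clone_draw G p b) -> on_open_seg z p (G u).
Proof. by case=> [[-> ->]|[-> ->]] //= /seg_sym. Qed.

Lemma new_same {a b c d : option V} {u : V} : isnew a b u -> isnew c d u -> same_edge a b c d.
Proof.
by case=> [[-> ->]|[-> ->]] [[-> ->]|[-> ->]]; [left|right|right|left].
Qed.

Lemma new_col {a b u} : isnew a b u -> clone_col chi v a b = chi v u.
Proof. by case=> [[-> ->]|[-> ->]]. Qed.

Lemma old_nse {x y x' y' : V} : ~ same_edge (Some x) (Some y) (Some x') (Some y') ->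
  ~ same_edge x y x' y'.
Proof. by move=> h [[E1 E2]|[E1 E2]]; apply: h; [left|right]; rewrite E1 E2. Qed.

Lemma NN2 (c2 : C2) {a b c d : option V} {u u' : V} {z} : isnew a b u -> isnew c d u' -> ~ same_edge a b c d ->
  on_open_seg z (clone_draw G p a) (clone_draw G p b) ->
  on_open_seg z (clone_draw G p c) (clone_draw G p d) -> False.
Proof.
move=> n1 n2 nse s1 s2.
case: (eqVneq u u') => [uu|uu].
  by subst u'; apply: nse; apply: new_same n1 n2.
by apply: (NN c2 (elimN eqP uu) (new_seg n1 s1) (new_seg n2 s2)).
Qed.

Lemma assemble : C1 -> C2 -> C4 -> C5 -> C6 ->
  layer_drawing (clone_rel e v) l (clone_draw G p) (clone_col chi v) /\
  general_position (clone_rel e v) (clone_draw G p).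
Proof.
move=> c1 c2 c4 c5 c6.
case: LD => Ginj [Lb [Lsym LNC]].
case: GP => GP1 GP2.
split; [split; [|split; [|split]] | split].
- move=> [a|] [b|] //= h.
  + by rewrite (Ginj _ _ h).
  + by case: (c1 a).
  + by case: (c1 b).
- by move=> [a|] [b|] //= h; apply: Lb.
- by move=> [a|] [b|] //= h; apply: Lsym.
- move=> a b c d h1 h2 hc [nse [z [s1 s2]]].
  case: (cls h1) => [[x [y [Ea Eb exy]]] | [u [evu nu]]];
  case: (cls h2) => [[x' [y' [Ec Ed exy']]] | [u' [evu' nu']]]; subst.
  + apply: (LNC x y x' y' exy exy' hc); split; first exact: old_nse.
    by exists z.
  + rewrite (new_col nu') /= in hc.
    exact: (NO c2 c4 c5 evu' exy (Logic.eq_sym hc) (new_seg nu' s2) s1).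
  + rewrite (new_col nu) /= in hc.
    exact: (NO c2 c4 c5 evu exy' hc (new_seg nu s1) s2).
  + exact: (NN2 c2 nu nu' nse s1 s2).
- move=> [a|] [b|] [c|] hab hbc hac /=.
  + by apply: gp1 => E; [apply: hab|apply: hbc|apply: hac]; rewrite E.
  + rewrite orient_cyc orient_cyc; apply: c2 => E; apply: hab; rewrite E.
    done.
  + by rewrite orient_cyc; apply: c2 => E; apply: hac; rewrite E.
  + by case: hbc.
  + by apply: c2 => E; apply: hbc; rewrite E.
  + by case: hac.
  + by case: hab.
  + by case: hab.
- move=> a1 b1 a2 b2 a3 b3 z h1 h2 h3 n12 n13 n23 s1 s2 s3.
  case: (cls h1) => [[x1 [y1 [E1 F1 e1]]] | [u1 [evu1 nu1]]];
  case: (cls h2) => [[x2 [y2 [E2 F2 e2]]] | [u2 [evu2 nu2]]];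
  case: (cls h3) => [[x3 [y3 [E3 F3 e3]]] | [u3 [evu3 nu3]]];
  try (by apply: (NN2 c2 nu1 nu2 n12 s1 s2));
  try (by apply: (NN2 c2 nu1 nu3 n13 s1 s3));
  try (by apply: (NN2 c2 nu2 nu3 n23 s2 s3)).
  all: subst.
  all: first [ by apply: (GP2 x1 y1 x2 y2 x3 y3 z) => //; exact: old_nse
             | exact: (c6 _ _ _ _ _ _ e1 e2 (old_nse n12) s1 s2 (new_seg nu3 s3))
             | exact: (c6 _ _ _ _ _ _ e1 e3 (old_nse n13) s1 s3 (new_seg nu2 s2))
             | exact: (c6 _ _ _ _ _ _ e2 e3 (old_nse n23) s2 s3 (new_seg nu1 s1))
             ].
Qed.
End Fixed.

Lemma get_d q : admissible e G chi v q ->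
  exists d : (R * R)%type, (d.1 != 0 \/ d.2 != 0) /\
  forall a b, a <> b -> e v a -> e v b -> chi v a = chi v b ->
  0 < (d.1 * ((G b).2 - (G v).2) - d.2 * ((G b).1 - (G v).1)) *
      (((G a).1 - (G v).1) * d.2 - ((G a).2 - (G v).2) * d.1).
Proof.
move=> hq.
have key : forall a b, a <> b -> e v a -> e v b -> chi v a = chi v b ->
  0 < orient (G v) q (G b) * orient (G v) (G a) q.
  move=> a b ab eva evb ch; apply: tie_pos; last exact: hq.
  by apply: gp1 => //; [exact: edge_neq eva | exact: edge_neq evb].
case: (eqVneq (q.1 - (G v).1) 0) => [h1|h1]; last first.
  exists (q.1 - (G v).1, q.2 - (G v).2); split; first by left.
  move=> a b ab eva evb ch; have := key a b ab eva evb ch.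
  by rewrite /orient /=.
case: (eqVneq (q.2 - (G v).2) 0) => [h2|h2]; last first.
  exists (q.1 - (G v).1, q.2 - (G v).2); split; first by right.
  move=> a b ab eva evb ch; have := key a b ab eva evb ch.
  by rewrite /orient /=.
exists (1, 0); split; first by left; rewrite oner_eq0.
move=> a b ab eva evb ch; have := key a b ab eva evb ch.
have -> : orient (G v) q (G b) = 0.
  by rewrite /orient h1 h2 !mul0r subrr.
by rewrite mul0r ltxx.
Qed.


Section Back.
Variable d : (R * R)%type.
Hypothesis dnz : d.1 != 0 \/ d.2 != 0.
Hypothesis dadm : forall a b, a <> b -> e v a -> e v b -> chi v a = chi v b ->
  0 < (d.1 * ((G b).2 - (G v).2) - d.2 * ((G b).1 - (G v).1)) *
      (((G a).1 - (G v).1) * d.2 - ((G a).2 - (G v).2) * d.1).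

Definition P (s : R) : (R * R)%type :=
  ((G v).1 + (s * d.1 + s ^+ 2 * - d.2), (G v).2 + (s * d.2 + s ^+ 2 * d.1)).

Lemma P_expand s (A B : (R * R)%type) : orient (P s) A B =
  orient (G v) A B + s * (- (d.1 * (B.2 - A.2) - d.2 * (B.1 - A.1)))
  + s ^+ 2 * (- ((- d.2) * (B.2 - A.2) - d.1 * (B.1 - A.1))).
Proof. rewrite /orient /P /=; ring. Qed.

Lemma nzw (w1 w2 : R) : w1 != 0 \/ w2 != 0 ->
  - (d.1 * w2 - d.2 * w1) != 0 \/ - ((- d.2) * w2 - d.1 * w1) != 0.
Proof.
move=> hw.
have hd : 0 < d.1 ^+ 2 + d.2 ^+ 2.
  case: dnz => h.
    by apply: ltr_wpDr; [exact: sqr_ge0 | exact: sq_pos].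
  by apply: ltr_wpDl; [exact: sqr_ge0 | exact: sq_pos].
have hw' : 0 < w1 ^+ 2 + w2 ^+ 2.
  case: hw => h.
    by apply: ltr_wpDr; [exact: sqr_ge0 | exact: sq_pos].
  by apply: ltr_wpDl; [exact: sqr_ge0 | exact: sq_pos].
case: (eqVneq (- (d.1 * w2 - d.2 * w1)) 0) => [h1|h1]; last by left.
case: (eqVneq (- ((- d.2) * w2 - d.1 * w1)) 0) => [h2|h2]; last by right.
have : (d.1 ^+ 2 + d.2 ^+ 2) * (w1 ^+ 2 + w2 ^+ 2) =
  (- (d.1 * w2 - d.2 * w1)) ^+ 2 + (- ((- d.2) * w2 - d.1 * w1)) ^+ 2 by ring.
rewrite h1 h2 expr0n /= addr0 => E.
have := mulr_gt0 hd hw'; rewrite E ltxx //.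
Qed.

Lemma ev_orient_nz (A B : (R * R)%type) : A <> B ->
  \forall s \near (0:R)^'+, orient (P s) A B != 0.
Proof.
move=> AB.
have hw : B.1 - A.1 != 0 \/ B.2 - A.2 != 0.
  case: (eqVneq (B.1 - A.1) 0) => [h1|h1]; last by left.
  case: (eqVneq (B.2 - A.2) 0) => [h2|h2]; last by right.
  exfalso; apply: AB; apply: pair_eq; apply/eqP; rewrite eq_sym -subr_eq0; exact/eqP.
have := ev_nz (orient (G v) A B) _ _ (or_intror (nzw _ _ hw)).
by apply: filterS => s; rewrite P_expand.
Qed.

Lemma ev_C1 : \forall s \near (0:R)^'+, C1 (P s).
Proof.
apply: filter_forall => a.
have key : ((G v).1 - (G a).1 != 0 \/ d.1 != 0 \/ - d.2 != 0) \/
           ((G v).2 - (G a).2 != 0 \/ d.2 != 0 \/ d.1 != 0).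
  case: (eqVneq (G v) (G a)) => [E|ne].
    by case: dnz => h; [left; right; left | right; right; left].
  case: (eqVneq (G v).1 (G a).1) => [h1|h1]; last by left; left; rewrite subr_eq0.
  case: (eqVneq (G v).2 (G a).2) => [h2|h2]; last by right; left; rewrite subr_eq0.
  by move/eqP: ne; case; apply: pair_eq.
case: key => k.
  have := ev_nz _ _ _ k; apply: filterS => s h E.
  have := congr1 fst E; rewrite /P /= => E1.
  by move/eqP: h; apply; lra.
have := ev_nz _ _ _ k; apply: filterS => s h E.
have := congr1 snd E; rewrite /P /= => E1.
by move/eqP: h; apply; lra.
Qed.

Lemma ev_C2 : \forall s \near (0:R)^'+, C2 (P s).
Proof.
apply: filter_forall => a; apply: filter_forall => b.
case: (pselect (a <> b)) => [ab|nab]; last by apply: nearW => s /nab.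
have : G a <> G b by move=> E; apply: ab; case: LD => Ginj _; exact: Ginj.
move/ev_orient_nz; apply: filterS => s h _; exact: h.
Qed.

Lemma ev_sign_orient (A B : (R * R)%type) : orient (G v) A B != 0 ->
  \forall s \near (0:R)^'+, 0 < orient (P s) A B * orient (G v) A B.
Proof.
move=> h; have := ev_sign _ 
  (- (d.1 * (B.2 - A.2) - d.2 * (B.1 - A.1)))
  (- ((- d.2) * (B.2 - A.2) - d.1 * (B.1 - A.1))) h.
by apply: filterS => s; rewrite P_expand.
Qed.

Lemma ev_C3 : \forall s \near (0:R)^'+, cell G S v (P s).
Proof.
apply: filter_forall => a; apply: filter_forall => b.
case: (pselect (a \in S /\ b \in S /\ a <> b)) => [[aS [bS ab]]|nab]; last first.
  by apply: nearW => s aS bS ab; exfalso; apply: nab.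
have va : v <> a by move=> E; move: vS; rewrite E aS.
have vb : v <> b by move=> E; move: vS; rewrite E bS.
have := ev_sign_orient _ _ (gp1 va ab vb); apply: filterS => s h _ _ _.
have E1 : orient (G a) (G b) (P s) = orient (P s) (G a) (G b) by rewrite /orient; ring.
have E2 : orient (G a) (G b) (G v) = orient (G v) (G a) (G b) by rewrite /orient; ring.
by rewrite /halfplane E1 E2 => h'; have := lt_trans h' h; rewrite ltxx.
Qed.

Lemma ev_C4 : \forall s \near (0:R)^'+, C4 (P s).
Proof.
apply: filter_forall => a; apply: filter_forall => b.
case: (pselect (a <> b /\ e v a /\ e v b /\ chi v a = chi v b)) => [[ab [eva [evb ch]]]|nab]; last first.
  by apply: nearW => s ab eva evb ch; exfalso; apply: nab.
have h := dadm _ _ ab eva evb ch.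
set X0 := d.1 * ((G b).2 - (G v).2) - d.2 * ((G b).1 - (G v).1) in h.
set Y0 := ((G a).1 - (G v).1) * d.2 - ((G a).2 - (G v).2) * d.1 in h.
have X0n : X0 != 0 by apply/eqP => E; rewrite E mul0r ltxx in h.
have Y0n : Y0 != 0 by apply/eqP => E; rewrite E mulr0 ltxx in h.
near=> s => _ _ _ _.
have s0 : 0 < s by near: s; exact: nbhs_right_gt.
set Xr := (- d.2) * ((G b).2 - (G v).2) - d.1 * ((G b).1 - (G v).1).
set Yr := ((G a).1 - (G v).1) * d.1 - ((G a).2 - (G v).2) * (- d.2).
have hx : 0 < (X0 + s * Xr + s ^+ 2 * 0) * X0 by near: s; exact: ev_sign.
have hy : 0 < (Y0 + s * Yr + s ^+ 2 * 0) * Y0 by near: s; exact: ev_sign.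
have -> : orient (G v) (P s) (G b) = s * (X0 + s * Xr + s ^+ 2 * 0).
  by rewrite /orient /P /X0 /Xr /=; ring.
have -> : orient (G v) (G a) (P s) = s * (Y0 + s * Yr + s ^+ 2 * 0).
  by rewrite /orient /P /Y0 /Yr /=; ring.
set f := X0 + s * Xr + s ^+ 2 * 0 in hx *.
set g := Y0 + s * Yr + s ^+ 2 * 0 in hy *.
have fg : 0 < f * g.
  have := mulr_gt0 hx hy.
  have -> : f * X0 * (g * Y0) = (f * g) * (X0 * Y0) by ring.
  by rewrite pmulr_lgt0.
have -> : s * f * (s * g) = s ^+ 2 * (f * g) by ring.
by apply: mulr_gt0 => //; apply: sq_pos; rewrite gt_eqF.
Unshelve. all: by end_near.
Qed.

Lemma ev_C5 : \forall s \near (0:R)^'+, C5 (P s).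
Proof.
apply: filter_forall => u; apply: filter_forall => x; apply: filter_forall => y.
case: (pselect (e v u /\ e x y /\ chi v u = chi x y /\ x <> u /\ y <> u /\ x <> v /\ y <> v))
  => [[evu [exy [ch [xu [yu [xv yv]]]]]]|nab]; last first.
  by apply: nearW => s evu exy ch xu yu xv yv z _ _; apply: nab.
have vu := edge_neq evu; have xy := edge_neq exy.
case: LD => _ [_ [_ LNC]].
have NC := LNC v u x y evu exy ch.
have o1n : orient (G v) (G x) (G y) != 0 by apply: gp1 => // E; [apply: xv|apply: yv]; rewrite E.
have o2n : orient (G x) (G y) (G u) != 0 by apply: gp1 => // E; apply: yu.
have o3n : orient (G v) (G u) (G x) != 0 by apply: gp1 => // E; [apply: xu|apply: xv]; rewrite E.
have o4n : orient (G v) (G u) (G y) != 0 by apply: gp1 => // E; [apply: yu|apply: yv]; rewrite E.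
have E1 : orient (G x) (G y) (G v) = orient (G v) (G x) (G y) by rewrite /orient; ring.
have [p12|p12] := ltrP 0 (orient (G x) (G y) (G v) * orient (G x) (G y) (G u)).
  have := ev_sign_orient _ _ o1n; apply: filterS => s h _ _ _ _ _ _ _ z s1 s2.
  have := cross_nonpos s1 s2.
  have Ep : orient (G x) (G y) (P s) = orient (P s) (G x) (G y) by rewrite /orient; ring.
  rewrite Ep; rewrite E1 in p12.
  have := mulr_gt0 h p12.
  have -> : orient (P s) (G x) (G y) * orient (G v) (G x) (G y) *
    (orient (G v) (G x) (G y) * orient (G x) (G y) (G u)) =
    (orient (P s) (G x) (G y) * orient (G x) (G y) (G u)) * (orient (G v) (G x) (G y)) ^+ 2 by ring.
  rewrite pmulr_lgt0; last exact: sq_pos.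
  by move=> h1 h2; have := lt_le_trans h1 h2; rewrite ltxx.
have n12 : orient (G x) (G y) (G v) * orient (G x) (G y) (G u) < 0.
  by rewrite lt_neqAle p12 andbT mulf_neq0 // E1.
have [p34|p34] := ltrP 0 (orient (G v) (G u) (G x) * orient (G v) (G u) (G y)); last first.
  have n34 : orient (G v) (G u) (G x) * orient (G v) (G u) (G y) < 0.
    by rewrite lt_neqAle p34 andbT mulf_neq0.
  have [z [z1 z2]] := both_neg_cross _ _ _ _ n12 n34.
  exfalso; apply: NC; split; last by exists z.
  by case=> [[E _]|[E _]]; [apply: xv|apply: yv]; rewrite E.
have := ev_sign_orient _ _ o3n; have := ev_sign_orient _ _ o4n.
apply: filterS2 => s h4 h3 _ _ _ _ _ _ _ z s1 s2.
have := cross_nonpos s2 s1.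
have := mulr_gt0 (mulr_gt0 h3 h4) p34.
have -> : orient (P s) (G u) (G x) * orient (G v) (G u) (G x) *
    (orient (P s) (G u) (G y) * orient (G v) (G u) (G y)) *
    (orient (G v) (G u) (G x) * orient (G v) (G u) (G y)) =
    (orient (P s) (G u) (G x) * orient (P s) (G u) (G y)) *
    (orient (G v) (G u) (G x) * orient (G v) (G u) (G y)) ^+ 2 by ring.
rewrite pmulr_lgt0; last by apply: sq_pos; rewrite mulf_neq0.
by move=> h1 h2; have := lt_le_trans h1 h2; rewrite ltxx.
Qed.

Lemma ev_C6 : \forall s \near (0:R)^'+, C6 (P s).
Proof.
apply: filter_forall => u; apply: filter_forall => x2; apply: filter_forall => y2.
apply: filter_forall => x3; apply: filter_forall => y3.
case: (pselect (e x2 y2 /\ e x3 y3 /\ ~ same_edge x2 y2 x3 y3 /\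
   exists z0, on_open_seg z0 (G x2) (G y2) /\ on_open_seg z0 (G x3) (G y3)))
  => [[e2 [e3 [nse [z0 [z1 z2]]]]]|nab]; last first.
  apply: nearW => s z h2 h3 nse s1 s2 _; apply: nab; split => //; split => //; split => //.
  by exists z.
have xy2 := edge_neq e2; have xy3 := edge_neq e3.
have hne : orient (G x3) (G y3) (G x2) != 0 \/ orient (G x3) (G y3) (G y2) != 0.
  case: (eqVneq x2 x3) => [E23|n23].
    subst x3; right; apply: gp1; [exact: xy3 | | exact: xy2].
    by move=> E; apply: nse; left; rewrite E.
  case: (eqVneq x2 y3) => [E23|n23'].
    subst y3; right; apply: gp1; [exact: xy3 | exact: xy2 |].
    by move=> E; apply: nse; right; rewrite E.
  left; apply: gp1; [exact: xy3 | | ].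
    by move=> E; move/eqP: n23'; apply; rewrite E.
  by move=> E; move/eqP: n23; apply; rewrite E.
have z0u : z0 <> G u.
  case: (eqVneq u x2) => [->|ux2].
    by case: (seg_not_end z1 (fun E => xy2 (LD.1 _ _ E))) => h _; exact: h.
  case: (eqVneq u y2) => [->|uy2].
    by case: (seg_not_end z1 (fun E => xy2 (LD.1 _ _ E))) => _ h; exact: h.
  move=> E; have := seg_orient0 z1; rewrite E; apply/eqP; apply: gp1 => //.
    by move=> E'; move/eqP: uy2; apply; rewrite E'.
  by move=> E'; move/eqP: ux2; apply; rewrite E'.
have := ev_orient_nz _ _ (nesym z0u).
apply: filterS => s h z h2 h3 nse' s1 s2 s3.
have zz := cross_unique hne s1 s2 z1 z2.
subst z.
by move/eqP: h; apply; apply: seg_orient0.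
Qed.

End Back.

Lemma main :
  ((exists p : R * R, cell G S v p /\
      layer_drawing (clone_rel e v) l (clone_draw G p) (clone_col chi v) /\
      general_position (clone_rel e v) (clone_draw G p))
   <-> (exists q : R * R, admissible e G chi v q)).
Proof.
split.
  by move=> [p [hc [ld gp]]]; exists p; apply: forward.
move=> [q hq]; have [d [dnz dadm]] := get_d _ hq.
have H : \forall s \near (0:R)^'+, C1 (P d s) /\ C2 (P d s) /\ cell G S v (P d s) /\
    C4 (P d s) /\ C5 (P d s) /\ C6 (P d s).
  near=> s; split; [|split; [|split; [|split; [|split]]]]; near: s.
  - by apply: ev_C1.
  - by apply: ev_C2.
  - by apply: ev_C3.
  - by apply: ev_C4.
  - by apply: ev_C5.
  - by apply: ev_C6.
have Hex := @filter_ex _ _ (at_right_proper_filter (0:R)) _ H.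
case: Hex => s Hs.
move: Hs => /= [h1 [h2 [h3 [h4 [h5 h6]]]]].
exists (P d s); split => //; exact: assemble.
Unshelve. all: by end_near.
Qed.

End Main.

Theorem lemma1 (R : realType) (V : finType) (e : rel V) (l : nat)
    (G : V -> (R * R)%type) (chi : V -> V -> nat) (S : {set V}) (v : V) :
  symmetric e -> irreflexive e ->
  layer_drawing e l G chi -> general_position e G ->
  vertex_cover e S -> v \notin S ->
  ((exists p : R * R, cell G S v p /\
      layer_drawing (clone_rel e v) l (clone_draw G p) (clone_col chi v) /\
      general_position (clone_rel e v) (clone_draw G p))
   <-> (exists q : R * R, admissible e G chi v q)).
Proof.
move=> esym eirr LD GP VC vS.
exact: main.
Qed.
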